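(* Let $ABC$ be a triangle and let $X, Y$ be points which are conjugate with respect to the circumcircle $\odot(ABC)$. Let $X', Y'$ be the isogonal conjugates of $X, Y$ with respect to $ABC$. Then the line $X'Y'$ passes through the center of the circumconic through $A, B, C, X', Y'$.
   Context: Two points $U, V$ are conjugate with respect to a conic $\mathcal{C}$ if the polar of $U$ with respect to $\mathcal{C}$ passes through $V$ (equivalently, the polar of $V$ passes through $U$). *)

(* Defs.v *)
From HB Require Import structures.
From mathcomp Require Import all_boot all_order all_algebra.
Set Implicit Arguments. Unset Strict Implicit. Unset Printing Implicit Defensive.
Import Order.TTheory GRing.Theory Num.Theory.
Local Open Scope ring_scope.

Section Plane.
Variable R : rcfType.
Definition point := (R * R)%type.

Definition vsub (P Q : point) : point := (P.1 - Q.1, P.2 - Q.2).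
Definition vadd (P Q : point) : point := (P.1 + Q.1, P.2 + Q.2).
Definition vscale (k : R) (P : point) : point := (k * P.1, k * P.2).
Definition dot (P Q : point) : R := P.1 * Q.1 + P.2 * Q.2.
Definition cross (P Q : point) : R := P.1 * Q.2 - P.2 * Q.1.
Definition vnorm (P : point) : R := Num.sqrt (dot P P).

Definition collinear (P Q S : point) : Prop := cross (vsub Q P) (vsub S P) = 0.

Definition circumcenter (A B C O : point) : Prop :=
  dot (vsub A O) (vsub A O) = dot (vsub B O) (vsub B O) /\
  dot (vsub A O) (vsub A O) = dot (vsub C O) (vsub C O).

(* P lies on the polar of U w.r.t. the circle with center O and squared radius r2 *)
Definition on_polar (O : point) (r2 : R) (U P : point) : Prop :=
  dot (vsub P O) (vsub U O) = r2.

Definition conjugate_wrt_circle (O : point) (r2 : R) (U V : point) : Prop :=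
  on_polar O r2 U V.

Definition bisector_dir (V Q1 Q2 : point) : point :=
  vadd (vscale (vnorm (vsub Q1 V))^-1 (vsub Q1 V))
       (vscale (vnorm (vsub Q2 V))^-1 (vsub Q2 V)).

Definition reflect_dir (u v : point) : point :=
  vsub (vscale (2 * dot v u / dot u u) u) v.

Definition on_isogonal_line (V Q1 Q2 X P : point) : Prop :=
  cross (vsub P V) (reflect_dir (bisector_dir V Q1 Q2) (vsub X V)) = 0.

Definition isogonal_conjugate (A B C X X' : point) : Prop :=
  on_isogonal_line A B C X X' /\ on_isogonal_line B C A X X' /\
  on_isogonal_line C A B X X'.

Record conic := Conic { ca : R; cb : R; cc : R; cd : R; ce : R; cf : R }.
Definition nondeg_coeffs (Q : conic) : Prop :=
  ~ (ca Q = 0 /\ cb Q = 0 /\ cc Q = 0 /\ cd Q = 0 /\ ce Q = 0 /\ cf Q = 0).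
Definition on_conic (Q : conic) (P : point) : Prop :=
  ca Q * P.1 ^+ 2 + cb Q * P.1 * P.2 + cc Q * P.2 ^+ 2 + cd Q * P.1 + ce Q * P.2
  + cf Q = 0.

(* Projective points of the plane: homogeneous triples (z1 : z2 : z3), not all 0;
   z3 = 0 are the points at infinity. *)
Definition hpoint := (R * R * R)%type.
Definition hnonzero (Z : hpoint) : Prop := ~ (Z.1.1 = 0 /\ Z.1.2 = 0 /\ Z.2 = 0).

(* Z is a center of Q: the pole of the line at infinity, i.e. with symmetric
   matrix M = [[2a,b,d],[b,2c,e],[d,e,2f]], M Z is proportional to (0,0,1). *)
Definition conic_center (Q : conic) (Z : hpoint) : Prop :=
  hnonzero Z /\
  2 * ca Q * Z.1.1 + cb Q * Z.1.2 + cd Q * Z.2 = 0 /\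
  cb Q * Z.1.1 + 2 * cc Q * Z.1.2 + ce Q * Z.2 = 0.

Definition on_line_h (P P' : point) (Z : hpoint) : Prop :=
  Z.1.1 * (P.2 - P'.2) - Z.1.2 * (P.1 - P'.1) + Z.2 * (P.1 * P'.2 - P'.1 * P.2) = 0.

End Plane.

(* Main.v *)
Require Import Defs.
From HB Require Import structures.
From mathcomp Require Import all_boot all_order all_algebra.
From mathcomp Require Import ring lra.
Import Order.TTheory GRing.Theory Num.Theory.
Local Open Scope ring_scope.

Set Implicit Arguments. Unset Strict Implicit. Unset Printing Implicit Defensive.
Section Helpers.
Variable R : rcfType.


Definition Jw (b c x : point R) : point R :=
  ((b.1*c.1 - b.2*c.2) * x.1 + (b.1*c.2 + b.2*c.1) * x.2,
   (b.1*c.2 + b.2*c.1) * x.1 - (b.1*c.1 - b.2*c.2) * x.2).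

Definition Phi (V Q1 Q2 X P : point R) : R :=
  cross (vsub P V) (Jw (vsub Q1 V) (vsub Q2 V) (vsub X V)).

Lemma iso_poly (V Q1 Q2 X P : point R) :
  ~ collinear V Q1 Q2 -> on_isogonal_line V Q1 Q2 X P -> Phi V Q1 Q2 X P = 0.
Proof.
rewrite /collinear /on_isogonal_line /Phi /reflect_dir /bisector_dir.
move: (vsub Q1 V) (vsub Q2 V) (vsub X V) (vsub P V) => [b1 b2] [c1 c2] [x1 x2] [p1 p2].
rewrite /cross /vnorm /dot /vsub /vscale /vadd /Jw /=.
move=> Hcr.
have Hcr' : b1 * c2 - b2 * c1 != 0 by apply/eqP.
have lag : (b1*b1+b2*b2)*(c1*c1+c2*c2) = (b1*c1+b2*c2)^+2 + (b1*c2-b2*c1)^+2 by ring.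
have hb0 : 0 <= b1*b1+b2*b2 by nra.
have hc0 : 0 <= c1*c1+c2*c2 by nra.
have hsq : 0 < (b1*c2-b2*c1)^+2 by rewrite lt_def sqr_ge0 andbT sqrf_eq0.
have hb : 0 < b1*b1+b2*b2.
  rewrite lt_def hb0 andbT; apply/eqP => h; move: lag; rewrite h mul0r => lag'.
  have := sqr_ge0 (b1*c1+b2*c2); lra.
have hc : 0 < c1*c1+c2*c2.
  rewrite lt_def hc0 andbT; apply/eqP => h; move: lag; rewrite h mulr0 => lag'.
  have := sqr_ge0 (b1*c1+b2*c2); lra.
set nb := Num.sqrt (b1*b1+b2*b2).
set nc := Num.sqrt (c1*c1+c2*c2).
have Hb : nb ^+ 2 = b1*b1+b2*b2 by rewrite sqr_sqrtr // ltW.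
have Hc : nc ^+ 2 = c1*c1+c2*c2 by rewrite sqr_sqrtr // ltW.
have nbp : 0 < nb by rewrite sqrtr_gt0.
have ncp : 0 < nc by rewrite sqrtr_gt0.
set k := nb * nc + (b1*c1+b2*c2).
have kp : 0 < k.
  have e : (nb*nc)^+2 = (b1*c1+b2*c2)^+2 + (b1*c2-b2*c1)^+2 by rewrite exprMn Hb Hc lag.
  have nn : 0 < nb * nc by rewrite mulr_gt0.
  rewrite /k; nra.
have nb0 : nb != 0 by rewrite gt_eqF.
have nc0 : nc != 0 by rewrite gt_eqF.
have k0 : k != 0 by rewrite gt_eqF.
set U1 := nc*b1 + nb*c1.
set U2 := nc*b2 + nb*c2.
have UU : U1*U1 + U2*U2 = 2 * (nb*nc) * k by rewrite /U1 /U2 /k; ring: Hb Hc.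
have key1 : (x1 * U1 + x2 * U2) * U1 - x1 * (nb*nc) * k
   = k * ((b1*c1 - b2*c2) * x1 + (b1*c2 + b2*c1) * x2) by rewrite /U1 /U2 /k; ring: Hb Hc.
have key2 : (x1 * U1 + x2 * U2) * U2 - x2 * (nb*nc) * k
   = k * ((b1*c2 + b2*c1) * x1 - (b1*c1 - b2*c2) * x2) by rewrite /U1 /U2 /k; ring: Hb Hc.
have eu1 : nb^-1 * b1 + nc^-1 * c1 = (nb*nc)^-1 * U1 by rewrite /U1; field; apply/andP.
have eu2 : nb^-1 * b2 + nc^-1 * c2 = (nb*nc)^-1 * U2 by rewrite /U2; field; apply/andP.
rewrite eu1 eu2.
have r1 : 2 * (x1 * ((nb * nc)^-1 * U1) + x2 * ((nb * nc)^-1 * U2)) /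
      ((nb * nc)^-1 * U1 * ((nb * nc)^-1 * U1) + (nb * nc)^-1 * U2 * ((nb * nc)^-1 * U2))
      = (x1 * U1 + x2 * U2) / k.
  have -> : (nb * nc)^-1 * U1 * ((nb * nc)^-1 * U1) + (nb * nc)^-1 * U2 * ((nb * nc)^-1 * U2)
     = ((nb*nc)^-1)^+2 * (U1*U1+U2*U2) by ring.
  rewrite UU. field. by rewrite k0 nb0 nc0.
rewrite r1.
have c1e : (x1 * U1 + x2 * U2) / k * ((nb * nc)^-1 * U1) - x1
   = (nb*nc)^-1 * ((b1*c1 - b2*c2) * x1 + (b1*c2 + b2*c1) * x2).
  apply: (mulfI k0). rewrite [RHS]mulrCA -key1. field. by rewrite k0 nb0 nc0.
have c2e : (x1 * U1 + x2 * U2) / k * ((nb * nc)^-1 * U2) - x2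
   = (nb*nc)^-1 * ((b1*c2 + b2*c1) * x1 - (b1*c1 - b2*c2) * x2).
  apply: (mulfI k0). rewrite [RHS]mulrCA -key2. field. by rewrite k0 nb0 nc0.
rewrite c1e c2e => H.
have nn0 : (nb*nc)^-1 != 0 by rewrite invr_eq0 mulf_neq0.
apply: (mulfI nn0). rewrite mulr0 -H. ring.
Qed.


Definition Dt (A B C : point R) := cross (vsub B A) (vsub C A).
Definition ba1 (A B C P : point R) := cross (vsub B P) (vsub C P).
Definition ba2 (A B C P : point R) := cross (vsub C P) (vsub A P).
Definition ba3 (A B C P : point R) := cross (vsub A P) (vsub B P).

Lemma phiA (A B C X P : point R) :
  Dt A B C * Phi A B C X P =
  ba2 A B C P * ba2 A B C X * dot (vsub B A) (vsub B A)
  - ba3 A B C P * ba3 A B C X * dot (vsub C A) (vsub C A).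
Proof. rewrite /Dt /Phi /ba2 /ba3 /Jw /cross /dot /vsub /=. ring. Qed.

Lemma phiB (A B C X P : point R) :
  Dt A B C * Phi B C A X P =
  ba3 A B C P * ba3 A B C X * dot (vsub C B) (vsub C B)
  - ba1 A B C P * ba1 A B C X * dot (vsub A B) (vsub A B).
Proof. rewrite /Dt /Phi /ba1 /ba3 /Jw /cross /dot /vsub /=. ring. Qed.

Lemma phiC (A B C X P : point R) :
  Dt A B C * Phi C A B X P =
  ba1 A B C P * ba1 A B C X * dot (vsub A C) (vsub A C)
  - ba2 A B C P * ba2 A B C X * dot (vsub B C) (vsub B C).
Proof. rewrite /Dt /Phi /ba1 /ba2 /Jw /cross /dot /vsub /=. ring. Qed.

Definition bil2 (Q : conic R) (P P' : point R) : R :=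
  2 * ca Q * P.1 * P'.1 + cb Q * (P.1 * P'.2 + P.2 * P'.1) + 2 * cc Q * P.2 * P'.2
  + cd Q * (P.1 + P'.1) + ce Q * (P.2 + P'.2) + 2 * cf Q.

Definition qv (Q : conic R) (P : point R) : R :=
  ca Q * P.1 ^+ 2 + cb Q * P.1 * P.2 + cc Q * P.2 ^+ 2 + cd Q * P.1 + ce Q * P.2 + cf Q.

Lemma bil_self Q P : bil2 Q P P = 2 * qv Q P.
Proof. rewrite /bil2 /qv; ring. Qed.

Lemma bil_bary Q (A B C X Y : point R) :
  let x1 := ba1 A B C X in let x2 := ba2 A B C X in let x3 := ba3 A B C X in
  let y1 := ba1 A B C Y in let y2 := ba2 A B C Y in let y3 := ba3 A B C Y in
  Dt A B C ^+ 2 * bil2 Q X Y =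
   x1 * y1 * bil2 Q A A + x2 * y2 * bil2 Q B B + x3 * y3 * bil2 Q C C
   + (x2 * y3 + x3 * y2) * bil2 Q B C + (x3 * y1 + x1 * y3) * bil2 Q C A
   + (x1 * y2 + x2 * y1) * bil2 Q A B.
Proof. rewrite /Dt /bil2 /ba1 /ba2 /ba3 /cross /vsub /=. ring. Qed.

Lemma bil_sym Q P P' : bil2 Q P P' = bil2 Q P' P.
Proof. rewrite /bil2; ring. Qed.

Definition circ (O : point R) (r2 : R) : conic R :=
  Conic 1 0 1 (-2 * O.1) (-2 * O.2) (O.1 ^+ 2 + O.2 ^+ 2 - r2).

Lemma circ_bil O r2 X Y : bil2 (circ O r2) X Y = 2 * (dot (vsub X O) (vsub Y O) - r2).
Proof. rewrite /bil2 /circ /dot /vsub /=; ring. Qed.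

Lemma circ_polar O r2 X Y :
  dot (vsub X O) (vsub X O) = r2 -> dot (vsub Y O) (vsub Y O) = r2 ->
  bil2 (circ O r2) X Y = - dot (vsub Y X) (vsub Y X).
Proof. rewrite circ_bil /dot /vsub /= => h1 h2. rewrite -h1 in h2 *. 
  have : 2 * ((X.1 - O.1) * (Y.1 - O.1) + (X.2 - O.2) * (Y.2 - O.2) -
 ((X.1 - O.1) * (X.1 - O.1) + (X.2 - O.2) * (X.2 - O.2))) + 
  ((Y.1 - X.1) * (Y.1 - X.1) + (Y.2 - X.2) * (Y.2 - X.2)) = 
  (Y.1 - O.1) * (Y.1 - O.1) + (Y.2 - O.2) * (Y.2 - O.2) - ((X.1 - O.1) * (X.1 - O.1) + (X.2 - O.2) * (X.2 - O.2)) by ring.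
  rewrite h2 subrr => h. by rewrite -[LHS]subr0 -h; ring.
Qed.

Definition lh (P P' : point R) (Z : hpoint R) : R :=
  Z.1.1 * (P.2 - P'.2) - Z.1.2 * (P.1 - P'.1) + Z.2 * (P.1 * P'.2 - P'.1 * P.2).

Definition mz1 (Q : conic R) (Z : hpoint R) := 2 * ca Q * Z.1.1 + cb Q * Z.1.2 + cd Q * Z.2.
Definition mz2 (Q : conic R) (Z : hpoint R) := cb Q * Z.1.1 + 2 * cc Q * Z.1.2 + ce Q * Z.2.
Definition mz3 (Q : conic R) (Z : hpoint R) := cd Q * Z.1.1 + ce Q * Z.1.2 + 2 * cf Q * Z.2.

Lemma bilh Q (A B C P : point R) (Z : hpoint R) :
  Dt A B C * (P.1 * mz1 Q Z + P.2 * mz2 Q Z + mz3 Q Z) =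
  lh B C Z * bil2 Q P A + lh C A Z * bil2 Q P B + lh A B Z * bil2 Q P C.
Proof. rewrite /Dt /mz1 /mz2 /mz3 /lh /bil2 /cross /vsub /=. ring. Qed.

Lemma Zrec (A B C : point R) (Z : hpoint R) :
  [/\ Dt A B C * Z.1.1 = lh B C Z * A.1 + lh C A Z * B.1 + lh A B Z * C.1,
      Dt A B C * Z.1.2 = lh B C Z * A.2 + lh C A Z * B.2 + lh A B Z * C.2 &
      Dt A B C * Z.2 = lh B C Z + lh C A Z + lh A B Z].
Proof. rewrite /Dt /lh /cross /vsub /=; split; ring. Qed.

Definition det3 (a1 a2 a3 b1 b2 b3 c1 c2 c3 : R) :=
  a1 * (b2 * c3 - b3 * c2) - a2 * (b1 * c3 - b3 * c1) + a3 * (b1 * c2 - b2 * c1).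

Lemma goal_bary (A B C X Y : point R) (Z : hpoint R) :
  Dt A B C ^+ 2 * lh X Y Z =
  det3 (lh B C Z) (lh C A Z) (lh A B Z)
       (ba1 A B C X) (ba2 A B C X) (ba3 A B C X)
       (ba1 A B C Y) (ba2 A B C Y) (ba3 A B C Y).
Proof. rewrite /Dt /det3 /lh /ba1 /ba2 /ba3 /cross /vsub /=. ring. Qed.

Lemma sum_bary (A B C X : point R) : ba1 A B C X + ba2 A B C X + ba3 A B C X = Dt A B C.
Proof. rewrite /Dt /ba1 /ba2 /ba3 /cross /vsub /=. ring. Qed.



Definition cnj (sa sb sc x1 x2 x3 y1 y2 y3 : R) :=
  sa*(x2*y3+x3*y2) + sb*(x3*y1+x1*y3) + sc*(x1*y2+x2*y1).

Lemma case1 (sa sb sc x1 x2 x3 y1 y2 y3 s z1 z2 z3 : R) :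
  sa != 0 -> sb != 0 -> sc != 0 -> x2 != 0 -> x3 != 0 -> y2 != 0 -> y3 != 0 -> s != 0 ->
  cnj sa sb sc x1 x2 x3 y1 y2 y3 = 0 ->
  x2*y3 - x3*y2 = 0 ->
  ~ (x3*y1 - x1*y3 = 0 /\ x1*y2 - x2*y1 = 0) ->
  let p := s*sa*(x2*y3 - x3*y2) in
  let q := s*sb*(x3*y1 - x1*y3) in
  let r := s*sc*(x1*y2 - x2*y1) in
  r*z2 + q*z3 = r*z1 + p*z3 -> r*z1 + p*z3 = q*z1 + p*z2 ->
  det3 z1 z2 z3 (sa*x2*x3) (sb*x3*x1) (sc*x1*x2) (sa*y2*y3) (sb*y3*y1) (sc*y1*y2) = 0.
Proof.
move=> sa0 sb0 sc0 x20 x30 y20 y30 s0 Hc Hn1 Hn p q r e1 e2.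
have p0 : p = 0 by rewrite /p Hn1 !mulr0.
have hy3 : y3 = x3 * y2 / x2.
  apply: (mulfI x20). rewrite [RHS]mulrC divfK //. by apply/eqP; rewrite -subr_eq0 Hn1.
have [rq|rq] := eqVneq (sc*(x1*y2 - x2*y1)) (sb*(x3*y1 - x1*y3)).
  exfalso.
  have ide : forall a2 a3 a1 : R, sb * ((x3*y1 - x1*y3)*a2 + (x1*y2 - x2*y1)*a3)
        = (x1*y2 - x2*y1) * (sc*a2 + sb*a3) - (sc*(x1*y2 - x2*y1) - sb*(x3*y1 - x1*y3)) * a2 by move=> a2 a3 a1; ring.
  have hn3 : x1*y2 - x2*y1 != 0.
    apply/eqP => h3. apply: Hn; split => //. move: rq; rewrite h3 mulr0 => /esym/eqP.
    by rewrite mulf_eq0 (negbTE sb0) /= => /eqP.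
  have nx : (x3*y1 - x1*y3)*x2 + (x1*y2 - x2*y1)*x3 = 0.
    have : (x2*y3 - x3*y2)*x1 + (x3*y1 - x1*y3)*x2 + (x1*y2 - x2*y1)*x3 = 0 by ring.
    by rewrite Hn1 mul0r add0r.
  have ny : (x3*y1 - x1*y3)*y2 + (x1*y2 - x2*y1)*y3 = 0.
    have : (x2*y3 - x3*y2)*y1 + (x3*y1 - x1*y3)*y2 + (x1*y2 - x2*y1)*y3 = 0 by ring.
    by rewrite Hn1 mul0r add0r.
  have ee : sc*x2 + sb*x3 = 0.
    have := ide x2 x3 x1. rewrite nx mulr0 rq subrr mul0r subr0 => /esym/eqP.
    by rewrite mulf_eq0 (negbTE hn3) /= => /eqP.
  have ff : sc*y2 + sb*y3 = 0.
    have := ide y2 y3 y1. rewrite ny mulr0 rq subrr mul0r subr0 => /esym/eqP.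
    by rewrite mulf_eq0 (negbTE hn3) /= => /eqP.
  have : sb * cnj sa sb sc x1 x2 x3 y1 y2 y3 =
     -2 * sa * sc * x2 * y2 + (sc*x2 + sb*x3) * (sa*y2 + sb*y1) + (sc*y2 + sb*y3) * (sa*x2 + sb*x1).
    rewrite /cnj; ring.
  rewrite Hc ee ff !mul0r !addr0 mulr0 => /esym/eqP. idtac.
  by apply/negP; rewrite !mulf_neq0 // oppr_eq0 pnatr_eq0.
have z10 : z1 = 0.
  have rq' : r - q != 0 by rewrite /r /q -!mulrA -mulrBr mulf_neq0 // subr_eq0.
  have : (r - q) * z1 = 0.
    by rewrite mulrBl; move: e2; rewrite p0 !mul0r !addr0 => ->; rewrite subrr.
  by move/eqP; rewrite mulf_eq0 (negbTE rq') /= => /eqP.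
move: e1; rewrite p0 z10 !mul0r mulr0 addr0 => E.
have E' : sc*(x1*y2 - x2*y1)*z2 + sb*(x3*y1 - x1*y3)*z3 = 0.
  apply: (mulfI s0). rewrite mulr0 -E /r /q; ring.
move: E'. rewrite hy3 => E'.
rewrite (_ : det3 _ _ _ _ _ _ _ _ _ = sa*x3*y2*(sc * (x1 * y2 - x2 * y1) * z2 + sb * (x3 * y1 - x1 * (x3 * y2 / x2)) * z3)).
  by rewrite E' mulr0.
rewrite /det3. field. done.
Qed.


Lemma detN (p q r z1 z2 z3 a1 a2 a3 b1 b2 b3 : R) :
  2 * p * q * r * det3 z1 z2 z3 a1 a2 a3 b1 b2 b3 =
  det3 (r*z2+q*z3) (r*z1+p*z3) (q*z1+p*z2)
       (r*a2+q*a3) (r*a1+p*a3) (q*a1+p*a2)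
       (r*b2+q*b3) (r*b1+p*b3) (q*b1+p*b2).
Proof. rewrite /det3; ring. Qed.

Lemma det111 (l u1 u2 u3 v1 v2 v3 : R) :
  det3 l l l u1 u2 u3 v1 v2 v3 = l * det3 1 1 1 u1 u2 u3 v1 v2 v3.
Proof. rewrite /det3; ring. Qed.

Lemma Nxi (sa sb sc x1 x2 x3 y1 y2 y3 s : R) :
  let p := s*sa*(x2*y3 - x3*y2) in
  let q := s*sb*(x3*y1 - x1*y3) in
  let r := s*sc*(x1*y2 - x2*y1) in
  [/\ r*(sb*x3*x1) + q*(sc*x1*x2) = - s*sb*sc*(x2*y3 - x3*y2)*x1^+2,
      r*(sa*x2*x3) + p*(sc*x1*x2) = - s*sc*sa*(x3*y1 - x1*y3)*x2^+2 &
      q*(sa*x2*x3) + p*(sb*x3*x1) = - s*sa*sb*(x1*y2 - x2*y1)*x3^+2].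
Proof. move=> p q r; rewrite /p /q /r; split; ring. Qed.

Lemma Neta (sa sb sc x1 x2 x3 y1 y2 y3 s : R) :
  let p := s*sa*(x2*y3 - x3*y2) in
  let q := s*sb*(x3*y1 - x1*y3) in
  let r := s*sc*(x1*y2 - x2*y1) in
  [/\ r*(sb*y3*y1) + q*(sc*y1*y2) = - s*sb*sc*(x2*y3 - x3*y2)*y1^+2,
      r*(sa*y2*y3) + p*(sc*y1*y2) = - s*sc*sa*(x3*y1 - x1*y3)*y2^+2 &
      q*(sa*y2*y3) + p*(sb*y3*y1) = - s*sa*sb*(x1*y2 - x2*y1)*y3^+2].
Proof. move=> p q r; rewrite /p /q /r; split; ring. Qed.

Lemma d111 (sa sb sc x1 x2 x3 y1 y2 y3 s : R) :
  det3 1 1 1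
    (- s*sb*sc*(x2*y3 - x3*y2)*x1^+2) (- s*sc*sa*(x3*y1 - x1*y3)*x2^+2) (- s*sa*sb*(x1*y2 - x2*y1)*x3^+2)
    (- s*sb*sc*(x2*y3 - x3*y2)*y1^+2) (- s*sc*sa*(x3*y1 - x1*y3)*y2^+2) (- s*sa*sb*(x1*y2 - x2*y1)*y3^+2)
  = s^+2 * sa * sb * sc * (x2*y3 - x3*y2) * (x3*y1 - x1*y3) * (x1*y2 - x2*y1) * cnj sa sb sc x1 x2 x3 y1 y2 y3.
Proof. rewrite /det3 /cnj; ring. Qed.


Lemma rot_eqs (p q r z1 z2 z3 : R) :
  r*z2+q*z3 = r*z1+p*z3 -> r*z1+p*z3 = q*z1+p*z2 ->
  [/\ p*z3 + r*z1 = p*z2 + q*z1, p*z2 + q*z1 = r*z2 + q*z3,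
      q*z1 + p*z2 = q*z3 + r*z2 & q*z3 + r*z2 = p*z3 + r*z1].
Proof.
move=> h1 h2; split.
- by rewrite addrC h2 addrC.
- by rewrite addrC -h2 -h1.
- by rewrite -h2 -h1 addrC.
- by rewrite addrC h1 addrC.
Qed.

Lemma core_param (sa sb sc x1 x2 x3 y1 y2 y3 s z1 z2 z3 : R) :
  sa != 0 -> sb != 0 -> sc != 0 -> x1 != 0 -> x2 != 0 -> x3 != 0 ->
  y1 != 0 -> y2 != 0 -> y3 != 0 -> s != 0 ->
  cnj sa sb sc x1 x2 x3 y1 y2 y3 = 0 ->
  ~ (x2*y3 - x3*y2 = 0 /\ x3*y1 - x1*y3 = 0 /\ x1*y2 - x2*y1 = 0) ->
  let p := s*sa*(x2*y3 - x3*y2) in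
  let q := s*sb*(x3*y1 - x1*y3) in
  let r := s*sc*(x1*y2 - x2*y1) in
  r*z2 + q*z3 = r*z1 + p*z3 -> r*z1 + p*z3 = q*z1 + p*z2 ->
  det3 z1 z2 z3 (sa*x2*x3) (sb*x3*x1) (sc*x1*x2) (sa*y2*y3) (sb*y3*y1) (sc*y1*y2) = 0.
Proof.
move=> sa0 sb0 sc0 x10 x20 x30 y10 y20 y30 s0 Hc Hn p q r e1 e2.
have [f1 f2 f3 f4] := rot_eqs e1 e2.
have [n1|n1] := eqVneq (x2*y3 - x3*y2) 0.
  apply: (case1 (s:=s)) => //. by move=> [h2 h3]; apply: Hn.
have [n2|n2] := eqVneq (x3*y1 - x1*y3) 0.
  have := @case1 sb sc sa x2 x3 x1 y2 y3 y1 s z2 z3 z1 sb0 sc0 sa0 x30 x10 y30 y10 s0.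
  rewrite (_ : cnj sb sc sa x2 x3 x1 y2 y3 y1 = cnj sa sb sc x1 x2 x3 y1 y2 y3); last by rewrite /cnj; ring.
  move=> /(_ Hc n2) H.
  rewrite (_ : det3 _ _ _ _ _ _ _ _ _ = det3 z2 z3 z1 (sb * x3 * x1) (sc * x1 * x2) (sa * x2 * x3)
        (sb * y3 * y1) (sc * y1 * y2) (sa * y2 * y3)); last by rewrite /det3; ring.
  apply: H.
  - by move=> [h3 h1]; apply: Hn.
  - by [].
  - by [].
have [n3|n3] := eqVneq (x1*y2 - x2*y1) 0.
  have := @case1 sc sa sb x3 x1 x2 y3 y1 y2 s z3 z1 z2 sc0 sa0 sb0 x10 x20 y10 y20 s0.
  rewrite (_ : cnj sc sa sb x3 x1 x2 y3 y1 y2 = cnj sa sb sc x1 x2 x3 y1 y2 y3); last by rewrite /cnj; ring.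
  move=> /(_ Hc n3) H.
  rewrite (_ : det3 _ _ _ _ _ _ _ _ _ = det3 z3 z1 z2 (sc * x1 * x2) (sa * x2 * x3) (sb * x3 * x1)
        (sc * y1 * y2) (sa * y2 * y3) (sb * y3 * y1)); last by rewrite /det3; ring.
  apply: H.
  - by move=> [h1 h2]; apply: Hn.
  - by [].
  - by [].
have pqr : 2 * p * q * r != 0.
  by rewrite /p /q /r !mulf_neq0 // pnatr_eq0.
have H := detN p q r z1 z2 z3 (sa*x2*x3) (sb*x3*x1) (sc*x1*x2) (sa*y2*y3) (sb*y3*y1) (sc*y1*y2).
rewrite -e2 -e1 det111 in H.
have [a1 a2 a3] := Nxi sa sb sc x1 x2 x3 y1 y2 y3 s.
have [b1 b2 b3] := Neta sa sb sc x1 x2 x3 y1 y2 y3 s.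
rewrite -/p -/q -/r in a1 a2 a3 b1 b2 b3.
rewrite a1 a2 a3 b1 b2 b3 d111 Hc !mulr0 in H.
by move/eqP: H; rewrite mulf_eq0 (negbTE pqr) /= => /eqP.
Qed.


Lemma par3 (sa sb sc x1 x2 x3 x1' x2' x3' : R) :
  sa != 0 -> x1 != 0 -> x2 != 0 -> x3 != 0 ->
  x3'*x3*sa = x1'*x1*sc -> x1'*x1*sb = x2'*x2*sa ->
  exists t, [/\ x1' = t*(sa*x2*x3), x2' = t*(sb*x3*x1) & x3' = t*(sc*x1*x2)].
Proof.
move=> sa0 x10 x20 x30 hB hC.
exists (x1' / (sa*x2*x3)); split.
- by field; rewrite ?x10 ?x20 ?x30 ?sa0.
- have -> : x2' = x1'*x1*sb / (x2*sa) by rewrite hC; field; rewrite ?x10 ?x20 ?x30 ?sa0.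
  by field; rewrite ?x10 ?x20 ?x30 ?sa0.
- have -> : x3' = x1'*x1*sc / (x3*sa) by rewrite -hB; field; rewrite ?x10 ?x20 ?x30 ?sa0.
  by field; rewrite ?x10 ?x20 ?x30 ?sa0.
Qed.

Lemma par_cross (L1 L2 L3 x1 x2 x3 y1 y2 y3 : R) :
  L1*x1 + L2*x2 + L3*x3 = 0 -> L1*y1 + L2*y2 + L3*y3 = 0 ->
  ~ (x2*y3 - x3*y2 = 0 /\ x3*y1 - x1*y3 = 0 /\ x1*y2 - x2*y1 = 0) ->
  exists s, [/\ L1 = s*(x2*y3 - x3*y2), L2 = s*(x3*y1 - x1*y3) & L3 = s*(x1*y2 - x2*y1)].
Proof.
move=> hx hy hn.
have c1 : L2*(x1*y2 - x2*y1) - L3*(x3*y1 - x1*y3) = 0.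
  have -> : L2*(x1*y2 - x2*y1) - L3*(x3*y1 - x1*y3)
     = x1*(L1*y1 + L2*y2 + L3*y3) - y1*(L1*x1 + L2*x2 + L3*x3) by ring.
  by rewrite hx hy !mulr0 subrr.
have c2 : L3*(x2*y3 - x3*y2) - L1*(x1*y2 - x2*y1) = 0.
  have -> : L3*(x2*y3 - x3*y2) - L1*(x1*y2 - x2*y1)
     = x2*(L1*y1 + L2*y2 + L3*y3) - y2*(L1*x1 + L2*x2 + L3*x3) by ring.
  by rewrite hx hy !mulr0 subrr.
have c3 : L1*(x3*y1 - x1*y3) - L2*(x2*y3 - x3*y2) = 0.
  have -> : L1*(x3*y1 - x1*y3) - L2*(x2*y3 - x3*y2)
     = x3*(L1*y1 + L2*y2 + L3*y3) - y3*(L1*x1 + L2*x2 + L3*x3) by ring.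
  by rewrite hx hy !mulr0 subrr.
move: c1 c2 c3.
set n1 := x2*y3 - x3*y2. set n2 := x3*y1 - x1*y3. set n3 := x1*y2 - x2*y1.
move=> c1 c2 c3.
have c1' : L3*n2 - L2*n3 = 0 by apply/eqP; rewrite -oppr_eq0 opprB c1.
have c2' : L1*n3 - L3*n1 = 0 by apply/eqP; rewrite -oppr_eq0 opprB c2.
have c3' : L2*n1 - L1*n2 = 0 by apply/eqP; rewrite -oppr_eq0 opprB c3.
have cl : forall a b : R, a - b = 0 -> a = b by move=> a b /eqP; rewrite subr_eq0 => /eqP.
have [e1|e1] := eqVneq n1 0; last first.
  exists (L1 / n1); split.
  - by field.
  - apply: (mulIf e1); rewrite mulrAC divfK //; exact: cl.
  - apply: (mulIf e1); rewrite mulrAC divfK //; exact: cl.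
have [e2|e2] := eqVneq n2 0; last first.
  exists (L2 / n2); split.
  - apply: (mulIf e2); rewrite mulrAC divfK //; exact: cl.
  - by field.
  - apply: (mulIf e2); rewrite mulrAC divfK //; exact: cl.
have [e3|e3] := eqVneq n3 0.
  by exfalso; apply: hn.
exists (L3 / n3); split.
- apply: (mulIf e3); rewrite mulrAC divfK //; exact: cl.
- apply: (mulIf e3); rewrite mulrAC divfK //; exact: cl.
- by field.
Qed.


Lemma core (D sa sb sc x1 x2 x3 y1 y2 y3 x1' x2' x3' y1' y2' y3' p q r z1 z2 z3 : R) :
  D != 0 -> sa != 0 -> sb != 0 -> sc != 0 ->
  x1 != 0 -> x2 != 0 -> x3 != 0 -> y1 != 0 -> y2 != 0 -> y3 != 0 ->
  x1+x2+x3 = D -> y1+y2+y3 = D -> x1'+x2'+x3' = D -> y1'+y2'+y3' = D ->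
  cnj sa sb sc x1 x2 x3 y1 y2 y3 = 0 ->
  x3'*x3*sa = x1'*x1*sc -> x1'*x1*sb = x2'*x2*sa ->
  y3'*y3*sa = y1'*y1*sc -> y1'*y1*sb = y2'*y2*sa ->
  ~ (p = 0 /\ q = 0 /\ r = 0) ->
  p*x2'*x3' + q*x3'*x1' + r*x1'*x2' = 0 ->
  p*y2'*y3' + q*y3'*y1' + r*y1'*y2' = 0 ->
  r*z2 + q*z3 = r*z1 + p*z3 -> r*z1 + p*z3 = q*z1 + p*z2 ->
  det3 z1 z2 z3 x1' x2' x3' y1' y2' y3' = 0.
Proof.
move=> D0 sa0 sb0 sc0 x10 x20 x30 y10 y20 y30 sx sy sx' sy' Hc hXB hXC hYB hYC Hpqr HX HY e1 e2.
have [t [ex1 ex2 ex3]] := par3 sa0 x10 x20 x30 hXB hXC.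
have [t' [ey1 ey2 ey3]] := par3 sa0 y10 y20 y30 hYB hYC.
subst x1' x2' x3' y1' y2' y3'.
have t0 : t != 0.
  apply/eqP => h; move: sx'; rewrite h !mul0r !addr0 => /esym/eqP; by rewrite (negbTE D0).
have t0' : t' != 0.
  apply/eqP => h; move: sy'; rewrite h !mul0r !addr0 => /esym/eqP; by rewrite (negbTE D0).
have Hn : ~ (x2*y3 - x3*y2 = 0 /\ x3*y1 - x1*y3 = 0 /\ x1*y2 - x2*y1 = 0).
  move=> [n1 [n2 n3]].
  have ey1 : y1 = x1.
    apply: (mulfI D0). rewrite -{1}sx -sy.
    have -> : (y1+y2+y3)*x1 = (x1+x2+x3)*y1 + (x1*y2 - x2*y1) - (x3*y1 - x1*y3) by ring.
    by rewrite n2 n3 subr0 addr0 mulrC.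
  have ey2 : y2 = x2.
    apply: (mulfI D0). rewrite -{1}sx -sy.
    have -> : (y1+y2+y3)*x2 = (x1+x2+x3)*y2 + (x2*y3 - x3*y2) - (x1*y2 - x2*y1) by ring.
    by rewrite n1 n3 subr0 addr0 mulrC.
  have ey3 : y3 = x3.
    apply: (mulfI D0). rewrite -{1}sx -sy.
    have -> : (y1+y2+y3)*x3 = (x1+x2+x3)*y3 + (x3*y1 - x1*y3) - (x2*y3 - x3*y2) by ring.
    by rewrite n1 n2 subr0 addr0 mulrC.
  subst y1 y2 y3.
  move: sx'. have -> : t * (sa * x2 * x3) + t * (sb * x3 * x1) + t * (sc * x1 * x2)
     = t / 2 * cnj sa sb sc x1 x2 x3 x1 x2 x3 by rewrite /cnj; field.
  by rewrite Hc mulr0 => /esym/eqP; rewrite (negbTE D0).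
have Lx : p*sb*sc*x1 + q*sc*sa*x2 + r*sa*sb*x3 = 0.
  have : t^+2 * (x1*x2*x3) * (p*sb*sc*x1 + q*sc*sa*x2 + r*sa*sb*x3) = 0 by rewrite -HX; ring.
  have nz : t^+2 * (x1*x2*x3) != 0 by rewrite !mulf_neq0 // expf_neq0.
  by move/eqP; rewrite mulf_eq0 (negbTE nz) /= => /eqP.
have Ly : p*sb*sc*y1 + q*sc*sa*y2 + r*sa*sb*y3 = 0.
  have : t'^+2 * (y1*y2*y3) * (p*sb*sc*y1 + q*sc*sa*y2 + r*sa*sb*y3) = 0 by rewrite -HY; ring.
  have nz : t'^+2 * (y1*y2*y3) != 0 by rewrite !mulf_neq0 // expf_neq0.
  by move/eqP; rewrite mulf_eq0 (negbTE nz) /= => /eqP.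
have [s0 [hp hq hr]] := par_cross Lx Ly Hn.
have ep : p = s0/(sa*sb*sc) * sa * (x2*y3 - x3*y2).
  have nz : sb*sc != 0 by rewrite mulf_neq0.
  apply: (mulIf nz); rewrite mulrA hp; field. by rewrite sa0 sb0 sc0.
have eq : q = s0/(sa*sb*sc) * sb * (x3*y1 - x1*y3).
  have nz : sc*sa != 0 by rewrite mulf_neq0.
  apply: (mulIf nz); rewrite mulrA hq; field. by rewrite sa0 sb0 sc0.
have er : r = s0/(sa*sb*sc) * sc * (x1*y2 - x2*y1).
  have nz : sa*sb != 0 by rewrite mulf_neq0.
  apply: (mulIf nz); rewrite mulrA hr; field. by rewrite sa0 sb0 sc0.
move: (s0/(sa*sb*sc)) ep eq er => s ep eq er.
subst p q r.
have s00 : s != 0.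
  apply/eqP => h; apply: Hpqr; by rewrite h !mul0r.
have -> : det3 z1 z2 z3 (t * (sa * x2 * x3)) (t * (sb * x3 * x1)) (t * (sc * x1 * x2))
    (t' * (sa * y2 * y3)) (t' * (sb * y3 * y1)) (t' * (sc * y1 * y2))
  = t * t' * det3 z1 z2 z3 (sa*x2*x3) (sb*x3*x1) (sc*x1*x2) (sa*y2*y3) (sb*y3*y1) (sc*y1*y2)
  by rewrite /det3; ring.
by rewrite (core_param sa0 sb0 sc0 x10 x20 x30 y10 y20 y30 s00 Hc Hn e1 e2) mulr0.
Qed.

Lemma dsym (P Q : point R) : dot (vsub P Q) (vsub P Q) = dot (vsub Q P) (vsub Q P).
Proof. rewrite /dot /vsub /=; ring. Qed.

Lemma cross_nz (u v : point R) : cross u v != 0 -> dot u u != 0 /\ dot v v != 0.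
Proof.
move=> h.
have lag : dot u u * dot v v = (dot u v)^+2 + (cross u v)^+2 by rewrite /dot /cross; ring.
have h1 := sqr_ge0 (dot u v).
have h2 : 0 < (cross u v)^+2 by rewrite lt_def sqr_ge0 andbT sqrf_eq0.
have : dot u u * dot v v != 0 by rewrite lag; apply/eqP => e; lra.
by rewrite mulf_eq0 negb_or => /andP[].
Qed.

Lemma qv_zero (Q : conic R) : (forall P : point R, qv Q P = 0) -> ~ nondeg_coeffs Q.
Proof.
move=> h; apply.
have e0 := h (0, 0). have e1 := h (1, 0). have e2 := h (-1, 0).
have e3 := h (0, 1). have e4 := h (0, -1). have e5 := h (1, 1).
move: e0 e1 e2 e3 e4 e5; rewrite /qv /=.
rewrite !expr2 !(mulr0, mul0r, addr0, add0r, mulr1, mul1r, mulrN, mulNr, opprK).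
move: (ca Q) (cb Q) (cc Q) (cd Q) (ce Q) (cf Q) => a b c d e f.
move=> e0 e1 e2 e3 e4 e5.
split; [lra|split; [lra|split; [lra|split; [lra|split; lra]]]].
Qed.

End Helpers.
Unset Implicit Arguments.

Theorem corollary3p2p1 (R : rcfType) (A B C O X Y X' Y' : point R) :
  ~ collinear A B C ->
  circumcenter A B C O ->
  conjugate_wrt_circle O (dot (vsub A O) (vsub A O)) X Y ->
  (* X, Y are not on the sidelines of ABC, so that their isogonal conjugates are
     defined and distinct from the vertices *)
  ~ collinear X B C -> ~ collinear X C A -> ~ collinear X A B ->
  ~ collinear Y B C -> ~ collinear Y C A -> ~ collinear Y A B ->
  isogonal_conjugate A B C X X' ->
  isogonal_conjugate A B C Y Y' ->
  forall (Q : conic R) (Z : hpoint R),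
    nondeg_coeffs Q ->
    on_conic Q A -> on_conic Q B -> on_conic Q C -> on_conic Q X' -> on_conic Q Y' ->
    conic_center Q Z ->
    on_line_h X' Y' Z.
Proof.
move=> nABC [cB cC] Hconj nX1 nX2 nX3 nY1 nY2 nY3 [iXA [iXB iXC]] [iYA [iYB iYC]]
  Q Z Hnd QA QB QC QX QY [_ [m1 m2]].
have D0 : Dt A B C != 0 by apply/eqP.
have nBCA : ~ collinear B C A.
  rewrite /collinear => h; apply: nABC; rewrite /collinear -[LHS]/(Dt A B C).
  by rewrite -h /Dt /cross /vsub /=; ring.
have nCAB : ~ collinear C A B.
  rewrite /collinear => h; apply: nABC; rewrite /collinear -[LHS]/(Dt A B C).
  by rewrite -h /Dt /cross /vsub /=; ring.
set sa := dot (vsub C B) (vsub C B).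
set sb := dot (vsub C A) (vsub C A).
set sc := dot (vsub B A) (vsub B A).
have [sc0 sb0] : sc != 0 /\ sb != 0 by apply: cross_nz; apply/eqP.
have [sa0 _] : sa != 0 /\ dot (vsub A B) (vsub A B) != 0 by apply: cross_nz; apply/eqP.
set x1 := ba1 A B C X. set x2 := ba2 A B C X. set x3 := ba3 A B C X.
set y1 := ba1 A B C Y. set y2 := ba2 A B C Y. set y3 := ba3 A B C Y.
set x1' := ba1 A B C X'. set x2' := ba2 A B C X'. set x3' := ba3 A B C X'.
set y1' := ba1 A B C Y'. set y2' := ba2 A B C Y'. set y3' := ba3 A B C Y'.
have x10 : x1 != 0 by apply/eqP. have x20 : x2 != 0 by apply/eqP. have x30 : x3 != 0 by apply/eqP.
have y10 : y1 != 0 by apply/eqP. have y20 : y2 != 0 by apply/eqP. have y30 : y3 != 0 by apply/eqP.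
have isoB : forall P P', on_isogonal_line B C A P P' ->
    ba3 A B C P' * ba3 A B C P * sa = ba1 A B C P' * ba1 A B C P * sc.
  move=> P P' h. have := phiB A B C P P'. rewrite (iso_poly nBCA h) mulr0 (dsym A B) => /esym/eqP.
  by rewrite subr_eq0 => /eqP.
have isoC : forall P P', on_isogonal_line C A B P P' ->
    ba1 A B C P' * ba1 A B C P * sb = ba2 A B C P' * ba2 A B C P * sa.
  move=> P P' h. have := phiC A B C P P'. rewrite (iso_poly nCAB h) mulr0 (dsym A C) (dsym B C) => /esym/eqP.
  by rewrite subr_eq0 => /eqP.
set r2 := dot (vsub A O) (vsub A O).
move: Hconj; rewrite /conjugate_wrt_circle /on_polar -/r2 => Hconj.
have dPP : forall P : point R, dot (vsub P P) (vsub P P) = 0 by move=> P; rewrite /dot /vsub /=; ring.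
have hA : dot (vsub A O) (vsub A O) = r2 by [].
have hB : dot (vsub B O) (vsub B O) = r2 by rewrite -cB.
have hC : dot (vsub C O) (vsub C O) = r2 by rewrite -cC.
have cnj0 : cnj sa sb sc x1 x2 x3 y1 y2 y3 = 0.
  have := bil_bary (circ O r2) A B C X Y.
  rewrite /= -/x1 -/x2 -/x3 -/y1 -/y2 -/y3.
  rewrite (circ_polar hA hA) (circ_polar hB hB) (circ_polar hC hC).
  rewrite (circ_polar hB hC) (circ_polar hC hA) (circ_polar hA hB) !dPP (dsym A C) -/sa -/sb -/sc.
  rewrite circ_bil (_ : dot (vsub X O) (vsub Y O) = r2); last by rewrite -Hconj /dot /=; ring.
  rewrite subrr mulr0 mulr0 => E.
  apply/eqP; rewrite -oppr_eq0; apply/eqP; rewrite E /cnj; ring.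
have qA : qv Q A = 0 := QA. have qB : qv Q B = 0 := QB. have qC : qv Q C = 0 := QC.
have qX : qv Q X' = 0 := QX. have qY : qv Q Y' = 0 := QY.
have bAA : bil2 Q A A = 0 by rewrite bil_self qA mulr0.
have bBB : bil2 Q B B = 0 by rewrite bil_self qB mulr0.
have bCC : bil2 Q C C = 0 by rewrite bil_self qC mulr0.
set p := bil2 Q B C. set q := bil2 Q C A. set r := bil2 Q A B.
have two0 : (2 : R) != 0 by rewrite pnatr_eq0.
have conic_pt : forall P, qv Q P = 0 ->
    p * ba2 A B C P * ba3 A B C P + q * ba3 A B C P * ba1 A B C P + r * ba1 A B C P * ba2 A B C P = 0.
  move=> P hP. have := bil_bary Q A B C P P. rewrite /= bil_self hP bAA bBB bCC -/p -/q -/r !mulr0 => E.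
  have : 2 * (p * ba2 A B C P * ba3 A B C P + q * ba3 A B C P * ba1 A B C P
     + r * ba1 A B C P * ba2 A B C P) = 0 by rewrite [RHS]E; ring.
  by move/eqP; rewrite mulf_eq0 (negbTE two0) /= => /eqP.
have HX := conic_pt X' qX. have HY := conic_pt Y' qY.
have Hpqr : ~ (p = 0 /\ q = 0 /\ r = 0).
  move=> [p0 [q0 r0]]. apply: (qv_zero _ Hnd) => P.
  have := bil_bary Q A B C P P. rewrite /= bil_self bAA bBB bCC -/p -/q -/r p0 q0 r0 !mulr0 !addr0 => E.
  have : Dt A B C ^+ 2 * 2 * qv Q P = 0 by rewrite -mulrA E.
  have D2 : Dt A B C ^+ 2 * 2 != 0 by rewrite mulf_neq0 // expf_neq0.
  by move/eqP; rewrite mulf_eq0 (negbTE D2) /= => /eqP.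
set z1 := lh B C Z. set z2 := lh C A Z. set z3 := lh A B Z.
have mz10 : mz1 Q Z = 0 := m1. have mz20 : mz2 Q Z = 0 := m2.
have eA := bilh Q A B C A Z. have eB := bilh Q A B C B Z. have eC := bilh Q A B C C Z.
rewrite mz10 mz20 !mulr0 !add0r -/z1 -/z2 -/z3 in eA eB eC.
rewrite bAA -/r (bil_sym Q A C) -/q in eA.
rewrite bBB (bil_sym Q B A) -/r -/p in eB.
rewrite bCC -/q (bil_sym Q C B) -/p in eC.
have e1 : r*z2 + q*z3 = r*z1 + p*z3.
  transitivity (Dt A B C * mz3 Q Z); [rewrite eA | rewrite eB]; ring.
have e2 : r*z1 + p*z3 = q*z1 + p*z2.
  transitivity (Dt A B C * mz3 Q Z); [rewrite eB | rewrite eC]; ring.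
have := core D0 sa0 sb0 sc0 x10 x20 x30 y10 y20 y30 (sum_bary A B C X) (sum_bary A B C Y)
  (sum_bary A B C X') (sum_bary A B C Y') cnj0 (isoB X X' iXB) (isoC X X' iXC)
  (isoB Y Y' iYB) (isoC Y Y' iYC) Hpqr HX HY e1 e2.
have D2 : Dt A B C ^+ 2 != 0 by rewrite expf_neq0.
rewrite -goal_bary => /eqP; rewrite mulf_eq0 (negbTE D2) /= => /eqP.
done.
Qed.
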